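(* Let $I$ be an ideal over an uncountable cardinal $\kappa$ such that $\mathcal{P}(\kappa)/I$ is complete, and let $\nu$ be a cardinal with $2^\nu<\kappa$. Then forcing with $\mathcal{P}(\kappa)/I\setminus\{[\emptyset]_I\}$ adds no new functions from $\nu$ to $2^\nu$.
   Context: An ideal over $\kappa$ means a proper, $\kappa$-complete ideal on $\mathcal{P}(\kappa)$ containing all singletons. The forcing notion $\mathcal{P}(\kappa)/I\setminus\{[\emptyset]_I\}$ is ordered by $[X]\leq[Y]$ iff $X\setminus Y\in I$. *)

(* Defs.v *)
Definition subset_of (K : Type) := K -> Prop.

Definition le_card (A B : Type) : Prop :=
  exists f : A -> B, forall x y, f x = f y -> x = y.
Definition lt_card (A B : Type) : Prop := le_card A B /\ ~ le_card B A.

(** kappa (represented by a type K of cardinality kappa) is uncountable. *)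
Definition uncountable (K : Type) : Prop := ~ le_card K nat.

Definition setminus {K : Type} (X Y : K -> Prop) : K -> Prop :=
  fun x => X x /\ ~ Y x.

Definition ideal_over (K : Type) (I : (K -> Prop) -> Prop) : Prop :=
  (forall X Y : K -> Prop, I Y -> (forall x, X x -> Y x) -> I X) /\
  (forall (J : Type) (F : J -> K -> Prop), lt_card J K ->
      (forall j, I (F j)) -> I (fun x => exists j, F j x)) /\
  ~ I (fun _ => True) /\
  (forall a : K, I (fun x => x = a)).

(** The preorder on P(kappa) inducing P(kappa)/I: [X] <= [Y] iff X \ Y in I. *)
Definition qle {K : Type} (I : (K -> Prop) -> Prop) (X Y : K -> Prop) : Prop :=
  I (setminus X Y).

Definition quotient_complete (K : Type) (I : (K -> Prop) -> Prop) : Prop :=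
  forall A : (K -> Prop) -> Prop,
    exists S : K -> Prop,
      (forall X, A X -> qle I X S) /\
      (forall T, (forall X, A X -> qle I X T) -> qle I S T).

(** Conditions of the forcing P(kappa)/I \ {[emptyset]}: representatives of
    nonzero classes, i.e. I-positive sets. *)
Definition condition {K : Type} (I : (K -> Prop) -> Prop) (X : K -> Prop) : Prop :=
  ~ I X.

Definition dense_below {K : Type} (I : (K -> Prop) -> Prop)
  (D : (K -> Prop) -> Prop) (q : K -> Prop) : Prop :=
  forall r, condition I r -> qle I r q ->
    exists r', condition I r' /\ qle I r' r /\ D r'.

(** A name for a function from N into the ground-model set V, forced to be
    such a function by p, represented by its forcing relation:
    F a b r  means  "r forces fdot(a) = b". *)
Definition function_name {K N V : Type} (I : (K -> Prop) -> Prop)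
  (p : K -> Prop) (F : N -> V -> (K -> Prop) -> Prop) : Prop :=
  (forall a b r r', condition I r' -> qle I r' r -> F a b r -> F a b r') /\
  (forall a b b' r, condition I r -> qle I r p -> F a b r -> F a b' r -> b = b') /\
  (forall a, dense_below I (fun r => exists b, F a b r) p).

(** Forcing with P(kappa)/I \ {[emptyset]} adds no new functions from N to V:
    whenever p forces fdot : N -> V, some q <= p and ground-model g : N -> V
    satisfy q forces fdot = g. *)
Definition adds_no_new_functions (K N V : Type) (I : (K -> Prop) -> Prop) : Prop :=
  forall (p : K -> Prop) (F : N -> V -> (K -> Prop) -> Prop),
    condition I p -> function_name I p F ->
    exists (q : K -> Prop) (g : N -> V),
      condition I q /\ qle I q p /\
      forall a, dense_below I (F a (g a)) q.

(* Main.v *)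
Require Import Defs.
From Stdlib Require Import Classical ClassicalEpsilon FunctionalExtensionality Cantor.


Lemma fchoice (X Y : Type) (P : X -> Y -> Prop) :
  (forall x, exists y, P x y) -> exists f : X -> Y, forall x, P x (f x).
Proof.
  intros H. exists (fun x => proj1_sig (constructive_indefinite_description _ (H x))).
  intro x. exact (proj2_sig (constructive_indefinite_description _ (H x))).
Qed.

Lemma le_card_trans A B C : le_card A B -> le_card B C -> le_card A C.
Proof.
  intros [f Hf] [g Hg]. exists (fun x => g (f x)). intros x y H. auto.
Qed.

Lemma lt_card_le A B C : le_card A B -> lt_card B C -> lt_card A C.
Proof.
  intros HAB [HBC HnCB]. split. eapply le_card_trans; eauto.
  intros HCA. apply HnCB. eapply le_card_trans; eauto.
Qed.

Lemma lt_False K : uncountable K -> lt_card False K.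
Proof.
  intros Hu. split. exists (fun x : False => match x with end). intros [].
  intros [f _]. apply Hu. exists (fun k => match f k with end). intros x. destruct (f x).
Qed.

Lemma lt_bool K : uncountable K -> lt_card bool K.
Proof.
  intros Hu.
  assert (Hxy : exists x y : K, x <> y).
  { apply NNPP. intro Hn. apply Hu. exists (fun _ => 0). intros x y _.
    apply NNPP. intro Hne. apply Hn. exists x, y. exact Hne. }
  destruct Hxy as [x [y Hxy]]. split.
  - exists (fun b : bool => if b then x else y). intros [|] [|] H; try reflexivity; elim Hxy; auto.
  - intros HK. apply Hu. eapply le_card_trans. exact HK.
    exists (fun b : bool => if b then 0 else 1). intros [|] [|]; auto; discriminate.
Qed.

Lemma le_N_pow N : le_card N (N -> bool).
Proof.
  exists (fun a c => if excluded_middle_informative (c = a) then true else false).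
  intros x y H. pose proof (f_equal (fun g => g x) H) as H1. simpl in H1.
  destruct (excluded_middle_informative (x = x)) as [_|n]; [|now elim n].
  destruct (excluded_middle_informative (x = y)); auto. discriminate.
Qed.

Section Forcing.
Lemma I_empty K (I : (K -> Prop) -> Prop) :
  uncountable K -> ideal_over K I -> I (fun _ => False).
Proof.
  intros Hu [Hd [Hc _]].
  pose proof (Hc False (fun j => match j with end) (lt_False K Hu) (fun j => match j with end)) as H.
  apply (Hd _ _ H). intros x [].
Qed.

Lemma I_union K (I : (K -> Prop) -> Prop) (X Y : K -> Prop) :
  uncountable K -> ideal_over K I -> I X -> I Y -> I (fun x => X x \/ Y x).
Proof.
  intros Hu Hid HX HY. destruct Hid as [Hd [Hc _]].
  pose proof (Hc bool (fun b => if b then X else Y) (lt_bool K Hu) (fun b => if b return I (if b then X else Y) then HX else HY)) as H.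
  apply (Hd _ _ H). intros x [Hx|Hx]; [exists true|exists false]; exact Hx.
Qed.

Lemma I_sub2 K (I : (K -> Prop) -> Prop) (X Y Z : K -> Prop) :
  uncountable K -> ideal_over K I -> I X -> I Y -> (forall x, Z x -> X x \/ Y x) -> I Z.
Proof.
  intros Hu Hid HX HY H. pose proof (I_union K I X Y Hu Hid HX HY).
  destruct Hid as [Hd _]. eapply Hd; eauto.
Qed.

Lemma qle_trans K (I : (K -> Prop) -> Prop) X Y Z :
  uncountable K -> ideal_over K I -> qle I X Y -> qle I Y Z -> qle I X Z.
Proof.
  unfold qle, setminus. intros Hu Hid H1 H2.
  apply (I_sub2 K I _ _ _ Hu Hid H1 H2). intros x [Hx Hz].
  destruct (classic (Y x)); auto.
Qed.

Lemma qle_sub K (I : (K -> Prop) -> Prop) X Y :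
  uncountable K -> ideal_over K I -> (forall x, X x -> Y x) -> qle I X Y.
Proof.
  intros Hu Hid H. pose proof (I_empty K I Hu Hid). destruct Hid as [Hd _].
  unfold qle, setminus. apply (Hd _ _ H0). intros x [Hx Hy]. auto.
Qed.

Lemma sup_meet K (I : (K -> Prop) -> Prop) (A : (K -> Prop) -> Prop) S r :
  uncountable K -> ideal_over K I ->
  (forall X, A X -> qle I X S) ->
  (forall T, (forall X, A X -> qle I X T) -> qle I S T) ->
  ~ I (fun x => S x /\ r x) -> exists X, A X /\ ~ I (fun x => X x /\ r x).
Proof.
  intros Hu Hid Hub Hl Hn. apply NNPP. intro Hno. apply Hn.
  assert (HT : forall X, A X -> qle I X (fun x => S x /\ ~ r x)).
  { intros X HX. unfold qle, setminus.
    assert (HXr : I (fun x => X x /\ r x)).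
    { apply NNPP. intro H. apply Hno. exists X. auto. }
    apply (I_sub2 K I _ _ _ Hu Hid (Hub X HX) HXr).
    intros x [Hx Hns]. destruct (classic (r x)); auto.
    left. split; auto. }
  pose proof (Hl _ HT) as H. unfold qle, setminus in H.
  destruct Hid as [Hd _]. apply (Hd _ _ H). intros x [Hs Hr]. split; auto. tauto.
Qed.
End Forcing.

Lemma main_forcing (K : Type) (I : (K -> Prop) -> Prop) (N : Type) :
  uncountable K ->
  ideal_over K I ->
  quotient_complete K I ->
  lt_card (N -> bool) K ->
  lt_card (N -> (N -> bool)) K ->
  adds_no_new_functions K N (N -> bool) I.
Proof.
  intros Hu Hid Hcompl Hlt HltF p F Hp [Fdown [Funiq Fdense]].
  set (A := fun a b r => condition I r /\ qle I r p /\ F a b r).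
  destruct (fchoice (N * (N -> bool)) (K -> Prop)
     (fun ab S => (forall X, A (fst ab) (snd ab) X -> qle I X S) /\
                  (forall T, (forall X, A (fst ab) (snd ab) X -> qle I X T) -> qle I S T))
     (fun ab => Hcompl (A (fst ab) (snd ab)))) as [S0 HS0].
  set (S := fun a b => S0 (a, b)).
  assert (HSub : forall a b X, A a b X -> qle I X (S a b)) by (intros a b; exact (proj1 (HS0 (a,b)))).
  assert (HSl : forall a b T, (forall X, A a b X -> qle I X T) -> qle I (S a b) T)
    by (intros a b; exact (proj2 (HS0 (a,b)))).
  pose proof Hid as Hid'. destruct Hid' as [Hd [Hc [Hprop _]]].
  set (C := fun (h : N -> N -> bool) x => p x /\ forall a, S a (h a) x).
  assert (Hex : exists h, ~ I (C h)).
  { apply NNPP. intro Hno.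
    assert (HU : I (fun x => exists h, C h x)).
    { apply Hc. exact HltF. intro h. apply NNPP. intro H. apply Hno. exists h. exact H. }
    set (D := fun a x => p x /\ forall b, ~ S a b x).
    assert (HD : forall a, I (D a)).
    { intro a. apply NNPP. intro HDa.
      assert (Hq : qle I (D a) p) by (apply qle_sub; auto; intros x [? ?]; auto).
      destruct (Fdense a (D a) HDa Hq) as [r [Hr [HrD [b Hb]]]].
      assert (Hrp : qle I r p) by (eapply qle_trans; eauto).
      assert (HrS : qle I r (S a b)) by (apply HSub; split; auto).
      apply Hr. apply (I_sub2 K I _ _ _ Hu Hid HrD HrS).
      intros x Hx. unfold setminus. destruct (classic (D a x)) as [HDx|HDx].
      - right. split; auto. destruct HDx as [_ HH]. apply HH.
      - left. auto. }
    assert (HW : I (fun x => exists a, D a x)).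
    { apply Hc. eapply lt_card_le. apply le_N_pow. exact Hlt. exact HD. }
    apply Hp. apply (I_sub2 K I _ _ _ Hu Hid HU HW).
    intros x Hx. destruct (classic (forall a, exists b, S a b x)) as [Hall|Hnall].
    - left. destruct (fchoice _ _ _ Hall) as [h Hh]. exists h. split; auto.
    - right. apply not_all_ex_not in Hnall. destruct Hnall as [a Ha].
      exists a. split; auto. intros b Hb. apply Ha. exists b. exact Hb. }
  destruct Hex as [h Hh]. exists (C h), h. split; [exact Hh|]. split.
  { apply qle_sub; auto. intros x [? ?]; auto. }
  intros a r Hr Hrq.
  assert (Hrp : qle I r p) by (eapply qle_trans; [auto|auto|exact Hrq|apply qle_sub; auto; intros x [? ?]; auto]).
  destruct (Fdense a r Hr Hrp) as [r1 [Hr1 [Hr1r [b Hb]]]].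
  assert (Hr1q : qle I r1 (C h)) by (eapply qle_trans; eauto).
  assert (HSr : ~ I (fun x => S a (h a) x /\ r1 x)).
  { intro HI. apply Hr1. apply (I_sub2 K I _ _ _ Hu Hid Hr1q HI).
    intros x Hx. destruct (classic (C h x)) as [[_ HC]|HC].
    - right. split; auto. - left. split; auto. }
  destruct (sup_meet K I (A a (h a)) (S a (h a)) r1 Hu Hid (HSub a (h a)) (HSl a (h a)) HSr)
    as [X [[HX [HXp HXF]] HXr]].
  assert (HY1 : qle I (fun x => X x /\ r1 x) X) by (apply qle_sub; auto; intros x [? ?]; auto).
  assert (HY2 : qle I (fun x => X x /\ r1 x) r1) by (apply qle_sub; auto; intros x [? ?]; auto).
  assert (E : h a = b).
  { apply (Funiq a (h a) b (fun x => X x /\ r1 x) HXr).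
    - exact (qle_trans K I _ _ _ Hu Hid HY1 HXp).
    - exact (Fdown a (h a) X _ HXr HY1 HXF).
    - exact (Fdown a b r1 _ HXr HY2 Hb). }
  exists r1. split; auto. split; auto. rewrite E. exact Hb.
Qed.


From mathcomp Require Import all_boot.
From mathcomp Require Import boolp classical_sets functions cardinality.
From Stdlib Require Import Classical ClassicalEpsilon FunctionalExtensionality Cantor.
Local Open Scope classical_set_scope.
Lemma le_card_setT (A : Type) (B : pointedType) :
  ([set: A] #<= [set: B])%card -> le_card A B.
Proof.
move/pcard_injP => [f finj]. exists f => x y fxy.
by apply: finj => //; rewrite in_setT.
Qed.

Lemma setT_le_card (A : Type) (B : pointedType) :
  le_card A B -> ([set: A] #<= [set: B])%card.
Proof.
move=> [f finj]; apply/pcard_injP; exists f => x y _ _; exact: finj.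
Qed.

Lemma le_nat_of_uncountable K : uncountable K -> le_card nat K.
Proof.
elim/Ppointed: K => K Hu.
  by exfalso; apply: Hu; exists (fun=> 0%N) => x; case: (no x).
apply: le_card_setT; apply/infiniteP => /finite_set_countable Hc.
by apply: Hu; apply: le_card_setT.
Qed.

Lemma fin_case N : ~ le_card nat N -> le_card (N -> N -> bool) nat.
Proof.
elim/Ppointed: N => N Hn.
  exists (fun=> 0%N) => f g _; apply/funext => a; case: (no a).
have /finite_setP [n Hfin] : finite_set [set: N].
  by apply/finite_setPn => H; apply: Hn; apply: le_card_setT.
move: Hfin; rewrite card_eq_le => /andP [/pcard_leP Hle _].
have [e efun einj] := (injfunPex.1 Hle).
have eI : forall x, (e x < n)%N.
  by move=> x; have := efun x I.
have einj' : forall x y, e x = e y -> x = y.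
  by move=> x y; apply: einj; rewrite in_setT.
pose code (phi : N -> N -> bool) : {ffun 'I_n * 'I_n -> bool} :=
  [ffun ij => `[< exists a c, e a = val ij.1 /\ e c = val ij.2 /\ phi a c = true >]].
exists (fun phi => pickle (code phi)) => phi psi /(pcan_inj pickleK) Hcode.
apply/funext => a; apply/funext => c.
have := congr1 (fun F : {ffun 'I_n * 'I_n -> bool} => F (Ordinal (eI a), Ordinal (eI c))) Hcode.
rewrite /= !ffunE /=.
have key : forall (chi : N -> N -> bool), `[< exists a' c', e a' = e a /\ e c' = e c /\ chi a' c' = true >] = chi a c.
  move=> chi; apply/idP/idP.
    by move/asboolP => [a' [c' [/einj' -> [/einj' -> ->]]]].
  by move=> H; apply/asboolP; exists a, c.
by rewrite !key.
Qed.

Local Close Scope classical_set_scope.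


Lemma zorn_plain T (P : (T -> Prop) -> Prop) :
 (forall F : (T->Prop)->Prop, (forall X, F X -> P X) ->
    (forall X Y, F X -> F Y -> (forall t, X t -> Y t) \/ (forall t, Y t -> X t)) ->
    P (fun t => exists X, F X /\ X t)) ->
 exists A, P A /\ forall B, (forall t, A t -> B t) -> (exists t, B t /\ ~ A t) -> ~ P B.
Proof.
move=> H.
have [|A [PA Amax]] := @Zorn_bigcup T P.
  move=> F FP Ftot.
  have -> : (\bigcup_(X in F) X)%classic = (fun t => exists X, F X /\ X t).
    apply/funext => t; apply/propext; split => [[X FX Xt]|[X [FX Xt]]].
      by exists X.
    by exists X.
  apply: H => [X FX|X Y FX FY]; first exact: FP.
  by case: (Ftot X Y FX FY) => h; [left|right]; move=> t; apply: h.
exists A; split => // B AB [t [Bt nAt]]; apply: Amax.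
split; first exact: AB.
by move=> BA; apply: nAt; apply: BA.
Qed.

Definition rinj {A B : Type} (X : A -> Prop) (Y : B -> Prop) :=
  exists S : A -> B -> Prop,
   (forall x, X x -> exists y, S x y /\ Y y) /\
   (forall x y y', X x -> S x y -> S x y' -> y = y') /\
   (forall x x' y, X x -> X x' -> S x y -> S x' y -> x = x').

Lemma rinj_trans {A B C : Type} (X : A -> Prop) (Y : B -> Prop) (Z : C -> Prop) :
  rinj X Y -> rinj Y Z -> rinj X Z.
Proof.
  intros [S [St [Sf Si]]] [T [Tt [Tf Ti]]].
  exists (fun x z => exists y, Y y /\ S x y /\ T y z). split; [|split].
  - intros x Hx. destruct (St x Hx) as [y [Hy HY]]. destruct (Tt y HY) as [z [Hz HZ]].
    exists z. split; auto. exists y. auto.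
  - intros x z z' Hx [y [HY [H1 H2]]] [y' [HY' [H1' H2']]].
    pose proof (Sf x y y' Hx H1 H1'). subst y'. eauto.
  - intros x x' z Hx Hx' [y [HY [H1 H2]]] [y' [HY' [H1' H2']]].
    pose proof (Ti y y' z HY HY' H2 H2'). subst y'. eauto.
Qed.

Lemma rinj_sub {A : Type} (X Y : A -> Prop) : (forall x, X x -> Y x) -> rinj X Y.
Proof.
  intros H. exists (fun x y => x = y). split; [|split].
  - intros x Hx. exists x. auto.
  - intros; subst; auto.
  - intros; subst; auto.
Qed.

Lemma rinj_prod {A B A' B' : Type} (X : A -> Prop) (Y : B -> Prop) (X' : A' -> Prop) (Y' : B' -> Prop) :
  rinj X Y -> rinj X' Y' ->
  rinj (fun u => X (fst u) /\ X' (snd u)) (fun v => Y (fst v) /\ Y' (snd v)).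
Proof.
  intros [S [St [Sf Si]]] [T [Tt [Tf Ti]]].
  exists (fun u v => S (fst u) (fst v) /\ T (snd u) (snd v)). split; [|split].
  - intros [x x'] [Hx Hx']. destruct (St x Hx) as [y [Hy HY]]. destruct (Tt x' Hx') as [y' [Hy' HY']].
    exists (y, y'). simpl. auto.
  - intros [x x'] [y y'] [z z'] [Hx Hx'] [H1 H2] [H3 H4]. simpl in *.
    f_equal; eauto.
  - intros [x x'] [z z'] [y y'] [Hx Hx'] [Hz Hz'] [H1 H2] [H3 H4]. simpl in *.
    f_equal; eauto.
Qed.


Lemma rinj_compare {A B : Type} (X : A -> Prop) (Y : B -> Prop) : rinj X Y \/ rinj Y X.
Proof.
  set (P := fun S : A * B -> Prop =>
     (forall a b, S (a, b) -> X a /\ Y b) /\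
     (forall a b b', S (a, b) -> S (a, b') -> b = b') /\
     (forall a a' b, S (a, b) -> S (a', b) -> a = a')).
  destruct (zorn_plain (A * B) P) as [M [[MXY [Mf Mi]] Mmax]].
  { intros F FP Ftot. split; [|split].
    - intros a b [S [FS HS]]. exact (proj1 (FP S FS) a b HS).
    - intros a b b' [S [FS HS]] [S' [FS' HS']].
      destruct (Ftot S S' FS FS') as [H|H].
      + exact (proj1 (proj2 (FP S' FS')) a b b' (H _ HS) HS').
      + exact (proj1 (proj2 (FP S FS)) a b b' HS (H _ HS')).
    - intros a a' b [S [FS HS]] [S' [FS' HS']].
      destruct (Ftot S S' FS FS') as [H|H].
      + exact (proj2 (proj2 (FP S' FS')) a a' b (H _ HS) HS').
      + exact (proj2 (proj2 (FP S FS)) a a' b HS (H _ HS')). }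
  destruct (classic (forall a, X a -> exists b, M (a, b))) as [Hall|Hn].
  { left. exists (fun a b => M (a, b)). split; [|split].
    - intros a Ha. destruct (Hall a Ha) as [b Hb]. exists b. split; auto. exact (proj2 (MXY a b Hb)).
    - intros a b b' _ H1 H2. eauto.
    - intros a a' b _ _ H1 H2. eauto. }
  destruct (classic (forall b, Y b -> exists a, M (a, b))) as [Hall'|Hn'].
  { right. exists (fun b a => M (a, b)). split; [|split].
    - intros b Hb. destruct (Hall' b Hb) as [a Ha]. exists a. split; auto. exact (proj1 (MXY a b Ha)).
    - intros b a a' _ H1 H2. eauto.
    - intros b b' a _ _ H1 H2. eauto. }
  exfalso.
  apply not_all_ex_not in Hn. destruct Hn as [a0 Ha0]. apply imply_to_and in Ha0. destruct Ha0 as [Xa0 Na0].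
  apply not_all_ex_not in Hn'. destruct Hn' as [b0 Hb0]. apply imply_to_and in Hb0. destruct Hb0 as [Yb0 Nb0].
  apply (Mmax (fun t => M t \/ t = (a0, b0))).
  - intros t Ht. auto.
  - exists (a0, b0). split; auto. intro H. apply Na0. exists b0. exact H.
  - split; [|split].
    + intros a b [H|H]; [exact (MXY a b H)|]. injection H; intros; subst; auto.
    + intros a b b' [H|H] [H'|H'].
      * eauto.
      * injection H'; intros; subst. elim Na0. exists b. exact H.
      * injection H; intros; subst. elim Na0. exists b'. exact H'.
      * injection H; injection H'; intros; subst; auto.
    + intros a a' b [H|H] [H'|H'].
      * eauto.
      * injection H'; intros; subst. elim Nb0. exists a. exact H.
      * injection H; intros; subst. elim Nb0. exists a'. exact H'.
      * injection H; injection H'; intros; subst; auto.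
Qed.


Definition BR {N : Type} (R : (N*N)*N -> Prop) (a : N) := exists v, R ((a,a),v).
Definition goodR {N : Type} (R : (N*N)*N -> Prop) :=
  (forall a c, BR R a -> BR R c -> exists v, R ((a,c),v)) /\
  (forall a c v, R ((a,c),v) -> BR R a /\ BR R c /\ BR R v) /\
  (forall u v v', R (u,v) -> R (u,v') -> v = v') /\
  (forall u u' v, R (u,v) -> R (u',v) -> u = u').

Lemma BR_mono {N : Type} (R R' : (N*N)*N -> Prop) a :
  (forall t, R t -> R' t) -> BR R a -> BR R' a.
Proof. intros H [v Hv]. exists v. auto. Qed.

Lemma goodR_union {N : Type} (F : ((N*N)*N -> Prop) -> Prop) :
  (forall X, F X -> goodR X) ->
  (forall X Y, F X -> F Y -> (forall t, X t -> Y t) \/ (forall t, Y t -> X t)) ->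
  goodR (fun t => exists X, F X /\ X t).
Proof.
  intros FP Ftot. set (U := fun t => exists X, F X /\ X t).
  assert (HU : forall X, F X -> forall t, X t -> U t) by (intros X FX t Ht; exists X; auto).
  assert (HB : forall a, BR U a -> exists X, F X /\ BR X a).
  { intros a [v [X [FX Hv]]]. exists X. split; auto. exists v. auto. }
  split; [|split; [|split]].
  - intros a c Ha Hc. destruct (HB a Ha) as [X [FX HXa]]. destruct (HB c Hc) as [Y [FY HYc]].
    destruct (Ftot X Y FX FY) as [H|H].
    + destruct (proj1 (FP Y FY) a c (BR_mono _ _ _ H HXa) HYc) as [v Hv].
      exists v. exists Y. auto.
    + destruct (proj1 (FP X FX) a c HXa (BR_mono _ _ _ H HYc)) as [v Hv].
      exists v. exists X. auto.
  - intros a c v [X [FX Hv]]. destruct (proj1 (proj2 (FP X FX)) a c v Hv) as [H1 [H2 H3]].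
    split; [|split]; (apply (BR_mono X U); [exact (HU X FX)|auto]).
  - intros u v v' [X [FX Hv]] [Y [FY Hv']].
    destruct (Ftot X Y FX FY) as [H|H].
    + exact (proj1 (proj2 (proj2 (FP Y FY))) u v v' (H _ Hv) Hv').
    + exact (proj1 (proj2 (proj2 (FP X FX))) u v v' Hv (H _ Hv')).
  - intros u u' v [X [FX Hv]] [Y [FY Hv']].
    destruct (Ftot X Y FX FY) as [H|H].
    + exact (proj2 (proj2 (proj2 (FP Y FY))) u u' v (H _ Hv) Hv').
    + exact (proj2 (proj2 (proj2 (FP X FX))) u u' v Hv (H _ Hv')).
Qed.

Lemma hessenberg (N : Type) (iota : nat -> N) (Hi : forall m n, iota m = iota n -> m = n) :
  rinj (fun _ : N*N => True) (fun _ : N => True).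
Proof.
  set (R0 := fun t : (N*N)*N => exists i j, fst (fst t) = iota i /\ snd (fst t) = iota j /\
                                snd t = iota (to_nat (i, j))).
  assert (BR0 : forall a, BR R0 a <-> exists i, a = iota i).
  { intros a; split.
    - intros [v [i [j [H1 _]]]]. exists i. exact H1.
    - intros [i ->]. exists (iota (to_nat (i,i))). exists i, i. simpl. auto. }
  assert (G0 : goodR R0).
  { split; [|split; [|split]].
    - intros a c Ha Hc. apply BR0 in Ha. apply BR0 in Hc. destruct Ha as [i ->]. destruct Hc as [j ->].
      exists (iota (to_nat (i,j))). exists i, j. simpl. auto.
    - intros a c v [i [j [H1 [H2 H3]]]]. simpl in *. split; [|split]; apply BR0; eauto.
    - intros u v v' [i [j [H1 [H2 H3]]]] [i' [j' [H1' [H2' H3']]]]. cbn [fst snd] in *.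
      rewrite H1 in H1'. rewrite H2 in H2'. apply Hi in H1'. apply Hi in H2'. subst. auto.
    - intros [a c] [a' c'] v [i [j [H1 [H2 H3]]]] [i' [j' [H1' [H2' H3']]]]. cbn [fst snd] in *.
      rewrite H3 in H3'. apply Hi in H3'. apply to_nat_inj in H3'. injection H3'. intros; subst. auto. }
  set (P := fun R : (N*N)*N -> Prop => goodR R /\ ((forall t, ~ R t) \/ (forall t, R0 t -> R t))).
  destruct (zorn_plain ((N*N)*N) P) as [M [[GM HM0] Mmax]].
  { intros F FP Ftot. split.
    - apply goodR_union; auto. intros X FX. exact (proj1 (FP X FX)).
    - destruct (classic (exists X t, F X /\ X t)) as [[X [t [FX Xt]]]|Hno].
      + right. intros s Hs. exists X. split; auto. destruct (proj2 (FP X FX)) as [H|H].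
        * elim (H t Xt). * auto.
      + left. intros t [X [FX Xt]]. apply Hno. exists X, t. auto. }
  assert (HM : forall t, R0 t -> M t).
  { destruct HM0 as [H|H]; auto. exfalso. apply (Mmax R0).
    - intros t Ht. elim (H t Ht).
    - exists ((iota 0, iota 0), iota (to_nat (0,0))). split; [exists 0, 0; simpl; auto|apply H].
    - split; auto. }
  clear HM0.
  destruct GM as [Mt [Mm [Mf Mi]]].
  set (B := BR M).
  assert (Bi : forall n, B (iota n)).
  { intro n. apply (BR_mono R0); auto. apply BR0. eauto. }
  assert (Mrinj : rinj (fun u : N*N => B (fst u) /\ B (snd u)) B).
  { exists (fun u v => M (u, v)). split; [|split].
    - intros [a c] [Ha Hc]. destruct (Mt a c Ha Hc) as [v Hv]. exists v. split; auto.
      exact (proj2 (proj2 (Mm a c v Hv))).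
    - intros u v v' _ H1 H2. eauto.
    - intros u u' v _ _ H1 H2. eauto. }
  set (b0 := iota 0). set (b1 := iota 1). set (b2 := iota 2).
  assert (b01 : b0 <> b1) by (intro H; apply Hi in H; discriminate).
  assert (b02 : b0 <> b2) by (intro H; apply Hi in H; discriminate).
  assert (b12 : b1 <> b2) by (intro H; apply Hi in H; discriminate).
  destruct (rinj_compare B (fun x => ~ B x)) as [[E [Et [Ef Ei]]]|[E [Et [Ef Ei]]]].
  2:{
    assert (H1 : rinj (fun _ : N => True) (fun u : N*N => B (fst u) /\ B (snd u))).
    { exists (fun x y => (B x /\ fst y = x /\ snd y = b0) \/ (~ B x /\ E x (fst y) /\ snd y = b1)).
      split; [|split].
      - intros x _. destruct (classic (B x)) as [Hx|Hx].
        + exists (x, b0). split; [left; simpl; auto|simpl; split; [auto|apply Bi]].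
        + destruct (Et x Hx) as [y [Hy HBy]]. exists (y, b1).
          split; [right; simpl; auto|simpl; split; [auto|apply Bi]].
      - intros x [y1 y2] [z1 z2] _ H1 H2; simpl in *.
        destruct H1 as [[Hx [-> ->]]|[Hx [H1 ->]]]; destruct H2 as [[Hx' [-> ->]]|[Hx' [H2 ->]]];
          try contradiction; auto.
        rewrite (Ef x y1 z1 Hx H1 H2). auto.
      - intros x x' [y1 y2] _ _ H1 H2; simpl in *.
        destruct H1 as [[Hx [-> ->]]|[Hx [H1 ->]]]; destruct H2 as [[Hx' [E1 E2]]|[Hx' [H2 E2]]].
        + auto.
        + elim b01; auto.
        + elim b01; auto.
        + exact (Ei x x' y1 Hx Hx' H1 H2). }
    assert (H2 : rinj (fun _ : N => True) (fun _ : N => True)) by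
      (eapply rinj_trans; [exact H1|eapply rinj_trans; [exact Mrinj|apply rinj_sub; auto]]).
    assert (H3 := rinj_trans _ _ _ H1 Mrinj).
    eapply rinj_trans; [|eapply rinj_trans; [apply (rinj_prod _ _ _ _ H3 H3)|]].
    - apply rinj_sub. auto.
    - eapply rinj_trans; [|eapply rinj_trans; [exact Mrinj|apply rinj_sub; auto]].
      apply rinj_sub. auto. }
  exfalso.
  set (D := fun y => exists x, B x /\ E x y).
  assert (DC : forall y, D y -> ~ B y).
  { intros y [x [Hx Hxy]]. destruct (Et x Hx) as [y' [Hy' Cy']]. rewrite (Ef x y y' Hx Hxy Hy'). auto. }
  set (Lift := fun x x' => (B x /\ x' = x) \/ (~ B x /\ B x' /\ E x' x)).
  set (New := fun u : N*N => (B (fst u) \/ D (fst u)) /\ (B (snd u) \/ D (snd u)) /\ ~ (B (fst u) /\ B (snd u))).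
  set (Tag := fun (u : N*N) t => (B (fst u) /\ t = b0) \/ (~ B (fst u) /\ B (snd u) /\ t = b1) \/
                                 (~ B (fst u) /\ ~ B (snd u) /\ t = b2)).
  assert (Lt : forall x, B x \/ D x -> exists x', Lift x x' /\ B x').
  { intros x [Hx|[x' [Hx' He]]]. exists x. split; auto. left; auto.
    exists x'. split; auto. right. split; [apply DC; exists x'; auto|auto]. }
  assert (Lf : forall x y y', Lift x y -> Lift x y' -> y = y').
  { intros x y y' [[H1 ->]|[H1 [H2 H3]]] [[H1' ->]|[H1' [H2' H3']]]; try contradiction; auto.
    exact (Ei y y' x H2 H2' H3 H3'). }
  assert (Li : forall x x' y, Lift x y -> Lift x' y -> (B x <-> B x') -> x = x').
  { intros x x' y [[H1 ->]|[H1 [H2 H3]]] [[H1' E1]|[H1' [H2' H3']]] Hiff.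
    - auto. - elim H1'. apply Hiff. auto. - elim H1. apply Hiff. auto.
    - exact (Ef y x x' H2 H3 H3'). }
  assert (Tt : forall u, exists t, Tag u t /\ B t).
  { intros [a c]. unfold Tag; simpl. destruct (classic (B a)); [exists b0|destruct (classic (B c)); [exists b1|exists b2]];
    split; auto; unfold b0, b1, b2; auto. }
  assert (Tf : forall u t t', Tag u t -> Tag u t' -> t = t').
  { intros u t t'; unfold Tag; intros H1 H2; intuition congruence. }
  assert (G : rinj New (fun w : N*N => B (fst w) /\ B (snd w))).
  { exists (fun u w => exists a' c', Lift (fst u) a' /\ Lift (snd u) c' /\ Tag u (fst w) /\ M ((a',c'), snd w)).
    split; [|split].
    - intros u [Ha [Hc _]]. destruct (Lt _ Ha) as [a' [La' Ba']]. destruct (Lt _ Hc) as [c' [Lc' Bc']].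
      destruct (Tt u) as [t [Ht Bt]]. destruct (Mt a' c' Ba' Bc') as [m Hm].
      exists (t, m). split. exists a', c'. simpl. auto.
      simpl. split; auto. exact (proj2 (proj2 (Mm _ _ _ Hm))).
    - intros u [t m] [t' m'] _ [a' [c' [H1 [H2 [H3 H4]]]]] [a'' [c'' [H1' [H2' [H3' H4']]]]]. simpl in *.
      rewrite (Lf _ _ _ H1 H1') in H4. rewrite (Lf _ _ _ H2 H2') in H4.
      rewrite (Tf u t t' H3 H3'). rewrite (Mf _ _ _ H4 H4'). auto.
    - intros [a c] [a2 c2] [t m] Hu Hu2 [a' [c' [H1 [H2 [H3 H4]]]]] [a'' [c'' [H1' [H2' [H3' H4']]]]].
      simpl in *. pose proof (Mi _ _ _ H4 H4') as Heq. injection Heq; intros; subst a'' c''.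
      destruct Hu as [_ [_ Hnb]]. destruct Hu2 as [_ [_ Hnb2]]. simpl in *.
      unfold Tag in H3, H3'. simpl in *.
      assert (Ha : B a <-> B a2) by intuition congruence.
      assert (Hc : B c <-> B c2) by intuition congruence.
      rewrite (Li _ _ _ H1 H1' Ha). rewrite (Li _ _ _ H2 H2' Hc). auto. }
  assert (ED : rinj B D).
  { exists E. split; [|split].
    - intros x Hx. destruct (Et x Hx) as [y [Hy _]]. exists y. split; auto. exists x. auto.
    - intros; eauto.
    - intros; eauto. }
  destruct (rinj_trans _ _ _ (rinj_trans _ _ _ G Mrinj) ED) as [Nw [Nt [Nf Ni]]].
  set (M' := fun t : (N*N)*N => M t \/ (New (fst t) /\ Nw (fst t) (snd t))).
  assert (BM' : forall a, BR M' a <-> B a \/ D a).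
  { intros a. split.
    - intros [v [H|[[H _] _]]]; [left; exists v; auto|exact H].
    - intros [Ha|Ha]. apply (BR_mono M); auto. intros t Ht; left; auto.
      assert (Hn : New (a,a)) by (split; [|split]; simpl; auto; intros [H _]; exact (DC a Ha H)).
      destruct (Nt _ Hn) as [v [Hv _]]. exists v. right. simpl. auto. }
  apply (Mmax M').
  - intros t Ht. left. auto.
  - destruct (Et b0 (Bi 0)) as [d [Hd _]].
    assert (Dd : D d) by (exists b0; split; auto; apply Bi).
    assert (Hn : New (d,d)) by (split; [|split]; simpl; auto; intros [H _]; exact (DC d Dd H)).
    destruct (Nt _ Hn) as [v [Hv _]]. exists ((d,d),v). split. right. simpl. auto.
    intro H. apply (DC d Dd). exists v. exact H.
  - split; [|right; intros t Ht; left; auto].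
    split; [|split; [|split]].
    + intros a c Ha Hc. apply BM' in Ha. apply BM' in Hc.
      destruct (classic (B a /\ B c)) as [[Ba Bc]|Hnb].
      * destruct (Mt a c Ba Bc) as [v Hv]. exists v. left. exact Hv.
      * assert (Hn : New (a,c)) by (split; [|split]; auto).
        destruct (Nt _ Hn) as [v [Hv _]]. exists v. right. simpl. auto.
    + intros a c v [H|[Hn Hv]].
      * destruct (Mm a c v H) as [H1 [H2 H3]]. split; [|split]; apply BM'; auto.
      * pose proof Hn as Hn'. destruct Hn' as [H1 [H2 _]]. cbn [fst snd] in H1, H2, Hv, Hn.
        split; [|split]; apply BM'; auto.
        right. destruct (Nt _ Hn) as [w [Hw Dw]]. rewrite (Nf _ _ _ Hn Hv Hw). exact Dw.
    + intros [a c] v v' [H|[Hn H]] [H'|[Hn' H']]; cbn [fst snd] in *.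
      * exact (Mf _ _ _ H H').
      * exfalso. destruct (Mm a c v H) as [Ha [Hc _]]. destruct Hn' as [_ [_ Hn']]. apply Hn'. simpl. auto.
      * exfalso. destruct (Mm a c v' H') as [Ha [Hc _]]. destruct Hn as [_ [_ Hn]]. apply Hn. simpl. auto.
      * exact (Nf _ _ _ Hn H H').
    + intros [a c] [a' c'] v [H|[Hn H]] [H'|[Hn' H']]; cbn [fst snd] in *.
      * exact (Mi _ _ _ H H').
      * exfalso. destruct (Mm a c v H) as [_ [_ Hbv]]. destruct (Nt _ Hn') as [w [Hw Dw]].
        rewrite <- (Nf _ _ _ Hn' H' Hw) in Dw. exact (DC v Dw Hbv).
      * exfalso. destruct (Mm a' c' v H') as [_ [_ Hbv]]. destruct (Nt _ Hn) as [w [Hw Dw]].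
        rewrite <- (Nf _ _ _ Hn H Hw) in Dw. exact (DC v Dw Hbv).
      * exact (Ni _ _ _ Hn Hn' H H').
Qed.


Lemma rinj_to_le (A B : Type) : rinj (fun _ : A => True) (fun _ : B => True) -> le_card A B.
Proof.
  intros [S [St [Sf Si]]].
  assert (H : forall a, exists b, S a b) by (intro a; destruct (St a I) as [b [Hb _]]; eauto).
  destruct (fchoice A B S H) as [f Hf]. exists f. intros x y Hxy.
  apply (Si x y (f x) I I); [apply Hf|rewrite Hxy; apply Hf].
Qed.

Lemma lemmaA K N : uncountable K -> lt_card (N -> bool) K -> lt_card (N -> N -> bool) K.
Proof.
  intros Hu Hlt. destruct (classic (le_card nat N)) as [[io Hi]|Hn].
  - destruct (rinj_to_le _ _ (hessenberg N io Hi)) as [f Hf].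
    apply (lt_card_le _ (N -> bool)); auto.
    exists (fun phi n => if excluded_middle_informative (exists a c, f (a,c) = n /\ phi a c = true) then true else false).
    intros phi psi H. apply functional_extensionality; intro a; apply functional_extensionality; intro c.
    pose proof (f_equal (fun g => g (f (a,c))) H) as H1; simpl in H1.
    assert (key : forall chi : N -> N -> bool, (exists a' c', f (a',c') = f (a,c) /\ chi a' c' = true) <-> chi a c = true).
    { intro chi; split.
      - intros [a' [c' [E Hc]]]. apply Hf in E. injection E; intros; subst; auto.
      - intro; exists a, c; auto. }
    destruct (excluded_middle_informative (exists a0 c0, f (a0,c0) = f (a,c) /\ phi a0 c0 = true)) as [Hp|Hp];
    destruct (excluded_middle_informative (exists a0 c0, f (a0,c0) = f (a,c) /\ psi a0 c0 = true)) as [Hq|Hq];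
    try discriminate.
    + pose proof (proj1 (key phi) Hp). pose proof (proj1 (key psi) Hq). congruence.
    + destruct (phi a c) eqn:E1; [elim Hp; apply (proj2 (key phi)); auto|].
      destruct (psi a c) eqn:E2; [elim Hq; apply (proj2 (key psi)); auto|]. reflexivity.
  - apply (lt_card_le _ nat). apply fin_case; auto. split; [apply le_nat_of_uncountable; auto|exact Hu].
Qed.

Theorem proposition1p4 (K : Type) (I : (K -> Prop) -> Prop) (N : Type) :
  uncountable K ->
  ideal_over K I ->
  quotient_complete K I ->
  lt_card (N -> bool) K ->
  adds_no_new_functions K N (N -> bool) I.
Proof.
  intros Hu Hid Hc Hlt. apply main_forcing; auto. apply lemmaA; auto.
Qed.
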